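(* Let $\kappa$ be a cardinal with $\kappa=\beth_\kappa$, let $\tau$ be a relational vocabulary with $|\tau|<\kappa$ and let $\beta$ be an ordinal. Then the relation between $\tau$-structures ''$M$ and $N$ are such that player II has a winning strategy in $EF^{1,c,\beta}_\kappa(M,N)$'' is transitive.
   Context: The game $EF^{1,c,\beta}_{\le\theta}(M,N)$ for a cardinal $\theta$: rounds $k=0,1,\dots$ with $\beta_{-1}=\beta$, $\pi_{-1}=\emptyset$; in round $k$, player I chooses an ordinal $\beta_k<\beta_{k-1}$ and a set $A_k$ of size $\le\theta$ contained in $M$ or in $N$; player II chooses $f_k:A_k\to\omega$; I chooses $n_k<\omega$; II must choose a partial isomorphism $\pi_k\supseteq\pi_{k-1}$ from $M$ to $N$ whose domain (if $A_k\subseteq M$), resp. range (if $A_k\subseteq N$), contains $f_k^{-1}(n_k)$. The play ends after the round in which $\beta_k=0$; II wins if she can always make her moves. The game $EF^{1,c,\beta}_\kappa(M,N)$: I first chooses a cardinal $\theta<\kappa$, then $EF^{1,c,\beta}_{\le\theta}(M,N)$ is played. *)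

(* Defs.v *)
From Stdlib Require Import Wellfounded List.
From Stdlib Require Fin.

Definition card_le (A B : Type) : Prop :=
  exists f : A -> B, forall x y, f x = f y -> x = y.
Definition card_lt (A B : Type) : Prop := card_le A B /\ ~ card_le B A.
Definition card_eq (A B : Type) : Prop :=
  exists f : A -> B, (forall x y, f x = f y -> x = y) /\ (forall y, exists x, f x = y).

Definition well_order (A : Type) (lt : A -> A -> Prop) : Prop :=
  well_founded lt /\
  (forall x y z, lt x y -> lt y z -> lt x z) /\
  (forall x y, lt x y \/ x = y \/ lt y x).

(* (K, lt) is a well-order of order type the initial ordinal of |K|,
   i.e. it represents the cardinal kappa = |K| as a von Neumann ordinal:
   no proper initial segment has cardinality |K|. *)
Definition initial_well_order (K : Type) (lt : K -> K -> Prop) : Prop :=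
  well_order K lt /\ forall x : K, ~ card_le K {y : K | lt y x}.

(* ---------- beth numbers by transfinite recursion ----------
   beth x  :=  nat + Sum_{y < x} P(beth y),
   so |beth x| = beth_{alpha} where alpha is the rank of x
   (beth_0 = aleph_0, beth_{a+1} = 2^{beth_a}, beth_l = sup_{a<l} beth_a). *)
Definition beth_step (K : Type) (lt : K -> K -> Prop) (x : K)
  (rec : forall y, lt y x -> Type) : Type :=
  (nat + { y : K & { H : lt y x & (rec y H -> Prop) } })%type.

Definition beth (K : Type) (lt : K -> K -> Prop) (wf : well_founded lt) : K -> Type :=
  Fix wf (fun _ => Type) (beth_step K lt).

(* beth indexed by the order type of (K, lt) itself *)
Definition beth_top (K : Type) (lt : K -> K -> Prop) (wf : well_founded lt) : Type :=
  (nat + { y : K & (beth K lt wf y -> Prop) })%type.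

Record structure (Sym : Type) (ar : Sym -> nat) : Type := Structure {
  carrier :> Type;
  rel : forall s : Sym, (Fin.t (ar s) -> carrier) -> Prop }.
Arguments carrier {Sym ar}.
Arguments rel {Sym ar}.

Section Game.
Context {Sym : Type} {ar : Sym -> nat}.

Definition partial_iso (M N : structure Sym ar) (p : M -> N -> Prop) : Prop :=
  (forall a b b', p a b -> p a b' -> b = b') /\
  (forall a a' b, p a b -> p a' b -> a = a') /\
  (forall (s : Sym) (a : Fin.t (ar s) -> M) (b : Fin.t (ar s) -> N),
      (forall i, p (a i) (b i)) -> (rel M s a <-> rel N s b)).

Context (M N : structure Sym ar).
Context (W : Type) (ltW : W -> W -> Prop) (beta : W).
Context (K : Type) (Theta : K -> Prop).   (* theta = |{x | Theta x}| *)

(* I's first move in a round: an ordinal and a set A_k contained in M or in N *)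
Record IMove : Type := { ib : W; iA : ((M -> Prop) + (N -> Prop))%type }.

Definition Adom (A : ((M -> Prop) + (N -> Prop))%type) : Type :=
  match A with inl A => {a : M | A a} | inr A => {b : N | A b} end.

Definition IRound : Type := (IMove * nat)%type.

(* A strategy of II, as a function of the previous moves of I
   (histories are listed latest round first). *)
Record IIStrategy : Type := {
  sf : list IRound -> forall m : IMove, Adom (iA m) -> nat;
  sp : list IRound -> forall m : IMove, (Adom (iA m) -> nat) -> nat -> (M -> N -> Prop) }.

Definition prev_beta (h : list IRound) : W :=
  match h with nil => beta | r :: _ => ib (fst r) end.

Definition prev_pi (s : IIStrategy) (h : list IRound) : M -> N -> Prop :=
  match h with
  | nil => fun _ _ => False
  | (m, n) :: h' => sp s h' m (sf s h' m) n
  end.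

Definition legal_I (h : list IRound) (m : IMove) : Prop :=
  ltW (ib m) (prev_beta h) /\ card_le (Adom (iA m)) {x : K | Theta x}.

Fixpoint legal_history (h : list IRound) : Prop :=
  match h with
  | nil => True
  | (m, _) :: h' => legal_history h' /\ legal_I h' m
  end.

Definition covers (A : ((M -> Prop) + (N -> Prop))%type)
  (f : Adom A -> nat) (n : nat) (p : M -> N -> Prop) : Prop :=
  match A as A0 return (Adom A0 -> nat) -> Prop with
  | inl A => fun f => forall (a : M) (H : A a), f (exist _ a H) = n -> exists b, p a b
  | inr A => fun f => forall (b : N) (H : A b), f (exist _ b H) = n -> exists a, p a b
  end f.

Definition winning_le_theta (s : IIStrategy) : Prop :=
  forall (h : list IRound) (m : IMove) (n : nat),
    legal_history h -> legal_I h m ->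
    let f := sf s h m in
    let p := sp s h m f n in
    partial_iso M N p /\
    (forall a b, prev_pi s h a b -> p a b) /\
    covers (iA m) f n p.

End Game.

(* II has a winning strategy in EF^{1,c,beta}_kappa(M,N), kappa = |K|:
   for every cardinal theta < kappa chosen by I (represented by a subset of K
   of cardinality < |K|), II has a winning strategy in EF^{1,c,beta}_{<=theta}. *)
Definition II_wins_EF {Sym : Type} {ar : Sym -> nat} (K : Type)
  (W : Type) (ltW : W -> W -> Prop) (beta : W) (M N : structure Sym ar) : Prop :=
  forall Theta : K -> Prop, card_lt {x : K | Theta x} K ->
    exists s : IIStrategy M N W, winning_le_theta M N W ltW beta K Theta s.

(* Main.v *)
Require Import Defs.
From Stdlib Require Import Wellfounded List Cantor.
From Stdlib Require Import ClassicalEpsilon ProofIrrelevance.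

Lemma card_img {X Y T : Type} (A : X -> Prop) (B : Y -> Prop) (p : X -> Y -> Prop) :
  (forall y, B y -> exists x, A x /\ p x y) ->
  (forall x y y', p x y -> p x y' -> y = y') ->
  card_le {x | A x} T -> card_le {y | B y} T.
Proof.
  intros HB Hf [g Hg].
  pose (h := fun y : {y | B y} =>
    let e := constructive_indefinite_description _ (HB (proj1_sig y) (proj2_sig y)) in
    exist A (proj1_sig e) (proj1 (proj2_sig e))).
  exists (fun y => g (h y)).
  intros [y Hy] [y' Hy'] E. apply Hg in E. unfold h in E. simpl in E.
  destruct (constructive_indefinite_description _ (HB y Hy)) as [x [Ax Px]].
  destruct (constructive_indefinite_description _ (HB y' Hy')) as [x' [Ax' Px']].
  simpl in E. injection E as ->.
  assert (y = y') by eauto. subst. f_equal. apply proof_irrelevance.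
Qed.

Section Comp.
Context {Sym : Type} {ar : Sym -> nat} (M N P : structure Sym ar).
Context (W : Type) (ltW : W -> W -> Prop) (beta : W) (K : Type) (Theta : K -> Prop).
Context (s1 : IIStrategy M N W) (s2 : IIStrategy N P W).
Hypothesis W1 : winning_le_theta M N W ltW beta K Theta s1.
Hypothesis W2 : winning_le_theta N P W ltW beta K Theta s2.

Definition comp (p1 : M -> N -> Prop) (p2 : N -> P -> Prop) : M -> P -> Prop :=
  fun a c => exists b, p1 a b /\ p2 b c.

Definition mL (w : W) (A : M -> Prop) : IMove M N W := Build_IMove M N W w (inl A).
Definition p1L h1 w A k := sp M N W s1 h1 (mL w A) (sf M N W s1 h1 (mL w A)) k.
Definition BL h1 w A k : N -> Prop :=
  fun b => exists a : {a | A a}, sf M N W s1 h1 (mL w A) a = k /\ p1L h1 w A k (proj1_sig a) b.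
Definition m2L h1 w A k : IMove N P W := Build_IMove N P W w (inl (BL h1 w A k)).

Definition mR (w : W) (C : P -> Prop) : IMove N P W := Build_IMove N P W w (inr C).
Definition p2R h2 w C k := sp N P W s2 h2 (mR w C) (sf N P W s2 h2 (mR w C)) k.
Definition BR h2 w C k : N -> Prop :=
  fun b => exists c : {c | C c}, sf N P W s2 h2 (mR w C) c = k /\ p2R h2 w C k b (proj1_sig c).
Definition m1R h2 w C k : IMove M N W := Build_IMove M N W w (inr (BR h2 w C k)).

Definition step (h1 : list (IRound M N W)) (h2 : list (IRound N P W))
  (m : IMove M P W) (n : nat) : list (IRound M N W) * list (IRound N P W) :=
  match iA M P W m with
  | inl A => ((mL (ib M P W m) A, fst (of_nat n)) :: h1,
              (m2L h1 (ib M P W m) A (fst (of_nat n)), snd (of_nat n)) :: h2)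
  | inr C => ((m1R h2 (ib M P W m) C (fst (of_nat n)), snd (of_nat n)) :: h1,
              (mR (ib M P W m) C, fst (of_nat n)) :: h2)
  end.

Fixpoint sim (h : list (IRound M P W)) : list (IRound M N W) * list (IRound N P W) :=
  match h with
  | nil => (nil, nil)
  | (m, n) :: h' => step (fst (sim h')) (snd (sim h')) m n
  end.

Definition gL h1 h2 w A (a : {a | A a}) : nat :=
  let k := sf M N W s1 h1 (mL w A) a in
  to_nat (k,
  match excluded_middle_informative
     (exists b0 : {b | BL h1 w A k b}, p1L h1 w A k (proj1_sig a) (proj1_sig b0)) with
  | left H => sf N P W s2 h2 (m2L h1 w A k) (proj1_sig (constructive_indefinite_description _ H))
  | right _ => 0
  end).

Definition gR h1 h2 w C (c : {c | C c}) : nat :=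
  let k := sf N P W s2 h2 (mR w C) c in
  to_nat (k,
  match excluded_middle_informative
     (exists b0 : {b | BR h2 w C k b}, p2R h2 w C k (proj1_sig b0) (proj1_sig c)) with
  | left H => sf M N W s1 h1 (m1R h2 w C k) (proj1_sig (constructive_indefinite_description _ H))
  | right _ => 0
  end).

Definition sfc (h : list (IRound M P W)) (m : IMove M P W) : Adom M P (iA M P W m) -> nat :=
  match iA M P W m as A return Adom M P A -> nat with
  | inl A => fun a => gL (fst (sim h)) (snd (sim h)) (ib M P W m) A a
  | inr C => fun c => gR (fst (sim h)) (snd (sim h)) (ib M P W m) C c
  end.

Definition spc (h : list (IRound M P W)) (m : IMove M P W)
  (f : Adom M P (iA M P W m) -> nat) (n : nat) : M -> P -> Prop :=
  comp (prev_pi M N W s1 (fst (sim ((m, n) :: h)))) (prev_pi N P W s2 (snd (sim ((m, n) :: h)))).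

Definition sc : IIStrategy M P W := Build_IIStrategy M P W sfc spc.

Lemma prev_pi_sc h a c :
  prev_pi M P W sc h a c <-> comp (prev_pi M N W s1 (fst (sim h))) (prev_pi N P W s2 (snd (sim h))) a c.
Proof.
  destruct h as [|[m n] h]; simpl.
  - unfold comp; firstorder.
  - reflexivity.
Qed.

Lemma beta_sim h : prev_beta M N W beta (fst (sim h)) = prev_beta M P W beta h
  /\ prev_beta N P W beta (snd (sim h)) = prev_beta M P W beta h.
Proof.
  destruct h as [|[m n] h]; simpl; auto.
  unfold step; destruct (iA M P W m); simpl; auto.
Qed.

Lemma legal_sim h : legal_history M P W ltW beta K Theta h ->
  legal_history M N W ltW beta K Theta (fst (sim h)) /\
  legal_history N P W ltW beta K Theta (snd (sim h)).
Proof.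
  induction h as [|[m n] h IH]; simpl; auto.
  intros [Hh [Hlt Hc]]. destruct (IH Hh) as [H1 H2].
  destruct (beta_sim h) as [E1 E2].
  unfold step; destruct m as [w [A|C]]; simpl in *.
  - assert (L1 : legal_I M N W ltW beta K Theta (fst (sim h)) (mL w A)).
    { split; [rewrite E1; exact Hlt | exact Hc]. }
    split; split; auto.
    split; [rewrite E2; exact Hlt|]. simpl.
    destruct (W1 (fst (sim h)) (mL w A) (fst (of_nat n)) H1 L1) as [[F _] _].
    apply (card_img A _ (p1L (fst (sim h)) w A (fst (of_nat n)))); auto.
    intros y [[x Ax] [_ Hp]]. eauto.
  - assert (L2 : legal_I N P W ltW beta K Theta (snd (sim h)) (mR w C)).
    { split; [rewrite E2; exact Hlt | exact Hc]. }
    split; split; auto.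
    split; [rewrite E1; exact Hlt|]. simpl.
    destruct (W2 (snd (sim h)) (mR w C) (fst (of_nat n)) H2 L2) as [[_ [F _]] _].
    apply (card_img C _ (fun x y => p2R (snd (sim h)) w C (fst (of_nat n)) y x)); auto.
    intros y [[x Ax] [_ Hp]]. eauto.
    intros; eauto.
Qed.


Lemma comp_iso p1 p2 : partial_iso M N p1 -> partial_iso N P p2 -> partial_iso M P (comp p1 p2).
Proof.
  intros [F1 [I1 R1]] [F2 [I2 R2]]. split; [|split].
  - intros a c c' [b [Hb Hc]] [b' [Hb' Hc']].
    assert (b = b') by eauto. subst. eauto.
  - intros a a' c [b [Hb Hc]] [b' [Hb' Hc']].
    assert (b = b') by eauto. subst. eauto.
  - intros s a c Hac.
    pose (b := fun i => proj1_sig (constructive_indefinite_description _ (Hac i))).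
    assert (Hb : forall i, p1 (a i) (b i) /\ p2 (b i) (c i)).
    { intro i. unfold b. destruct (constructive_indefinite_description _ (Hac i)); auto. }
    rewrite (R1 s a b (fun i => proj1 (Hb i))).
    apply (R2 s b c (fun i => proj2 (Hb i))).
Qed.

Lemma gL_spec h1 h2 w A a (Ha : A a) :
  let k := sf M N W s1 h1 (mL w A) (exist _ a Ha) in
  (exists b, p1L h1 w A k a b) ->
  exists b0 : {b | BL h1 w A k b}, p1L h1 w A k a (proj1_sig b0) /\
    gL h1 h2 w A (exist _ a Ha) = to_nat (k, sf N P W s2 h2 (m2L h1 w A k) b0).
Proof.
  intros k [b Hb]. unfold gL. fold k.
  destruct (excluded_middle_informative _) as [Hx|Hx].
  - destruct (constructive_indefinite_description _ Hx) as [b0 Hb0]. simpl. eauto.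
  - exfalso. apply Hx. unshelve eexists (exist _ b _); [|exact Hb].
    exists (exist _ a Ha). split; [reflexivity|exact Hb].
Qed.

Lemma gR_spec h1 h2 w C c (Hc : C c) :
  let k := sf N P W s2 h2 (mR w C) (exist _ c Hc) in
  (exists b, p2R h2 w C k b c) ->
  exists b0 : {b | BR h2 w C k b}, p2R h2 w C k (proj1_sig b0) c /\
    gR h1 h2 w C (exist _ c Hc) = to_nat (k, sf M N W s1 h1 (m1R h2 w C k) b0).
Proof.
  intros k [b Hb]. unfold gR. fold k.
  destruct (excluded_middle_informative _) as [Hx|Hx].
  - destruct (constructive_indefinite_description _ Hx) as [b0 Hb0]. simpl. eauto.
  - exfalso. apply Hx. unshelve eexists (exist _ b _); [|exact Hb].
    exists (exist _ c Hc). split; [reflexivity|exact Hb].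
Qed.

Lemma win_sc : winning_le_theta M P W ltW beta K Theta sc.
Proof.
  intros h m n Hh Hm. cbv zeta.
  destruct (legal_sim h Hh) as [H1 H2].
  pose proof (legal_sim ((m, n) :: h) (conj Hh Hm)) as LL. simpl in LL.
  destruct m as [w [A|C]]; simpl in LL |- *; unfold step in LL |- *; simpl in LL |- *;
    destruct LL as [[_ L1] [_ L2]].
  - destruct (W1 _ _ (fst (of_nat n)) H1 L1) as [PI1 [Ext1 Cov1]].
    destruct (W2 _ _ (snd (of_nat n)) H2 L2) as [PI2 [Ext2 Cov2]].
    split; [apply comp_iso; auto|split].
    + intros a c Hp. apply prev_pi_sc in Hp. destruct Hp as [b [Hb Hc]].
      exists b; split; [apply Ext1 | apply Ext2]; auto.
    + simpl. intros a Ha Hg.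
      change (gL (fst (sim h)) (snd (sim h)) w A (exist _ a Ha) = n) in Hg.
      simpl in Cov1.
      assert (Ek : fst (of_nat n) = sf M N W s1 (fst (sim h)) (mL w A) (exist _ a Ha)).
      { rewrite <- Hg. unfold gL; cbv zeta. rewrite cancel_of_to. reflexivity. }
      destruct (Cov1 a Ha (eq_sym Ek)) as [b Hb].
      rewrite Ek in *.
      destruct (gL_spec (fst (sim h)) (snd (sim h)) w A a Ha) as [[b0 Hb0] [Hp Hgl]]; [exists b; exact Hb|].
      rewrite Hgl in Hg.
      assert (En : snd (of_nat n) = sf N P W s2 (snd (sim h)) (m2L (fst (sim h)) w A (sf M N W s1 (fst (sim h)) (mL w A) (exist _ a Ha))) (exist _ b0 Hb0)).
      { rewrite <- Hg, cancel_of_to. reflexivity. }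
      simpl in Cov2. destruct (Cov2 b0 Hb0 (eq_sym En)) as [c Hc].
      exists c, b0. simpl. rewrite Ek. split; [exact Hp|exact Hc].
  - destruct (W2 _ _ (fst (of_nat n)) H2 L2) as [PI2 [Ext2 Cov2]].
    destruct (W1 _ _ (snd (of_nat n)) H1 L1) as [PI1 [Ext1 Cov1]].
    split; [apply comp_iso; auto|split].
    + intros a c Hp. apply prev_pi_sc in Hp. destruct Hp as [b [Hb Hc]].
      exists b; split; [apply Ext1 | apply Ext2]; auto.
    + simpl. intros c Hc Hg.
      change (gR (fst (sim h)) (snd (sim h)) w C (exist _ c Hc) = n) in Hg.
      simpl in Cov2.
      assert (Ek : fst (of_nat n) = sf N P W s2 (snd (sim h)) (mR w C) (exist _ c Hc)).
      { rewrite <- Hg. unfold gR; cbv zeta. rewrite cancel_of_to. reflexivity. }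
      destruct (Cov2 c Hc (eq_sym Ek)) as [b Hb].
      rewrite Ek in *.
      destruct (gR_spec (fst (sim h)) (snd (sim h)) w C c Hc) as [[b0 Hb0] [Hp Hgl]]; [exists b; exact Hb|].
      rewrite Hgl in Hg.
      assert (En : snd (of_nat n) = sf M N W s1 (fst (sim h)) (m1R (snd (sim h)) w C (sf N P W s2 (snd (sim h)) (mR w C) (exist _ c Hc))) (exist _ b0 Hb0)).
      { rewrite <- Hg, cancel_of_to. reflexivity. }
      simpl in Cov1. destruct (Cov1 b0 Hb0 (eq_sym En)) as [a Ha].
      exists a, b0. simpl. rewrite Ek. split; [exact Ha|exact Hp].
Qed.

End Comp.

Theorem mainTheorem3 :
  forall (K : Type) (ltK : K -> K -> Prop) (wfK : well_founded ltK),
    initial_well_order K ltK ->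
    card_eq K (beth_top K ltK wfK) ->
  forall (Sym : Type) (ar : Sym -> nat),
    card_lt Sym K ->
  forall (W : Type) (ltW : W -> W -> Prop),
    well_order W ltW ->
  forall (beta : W) (M N P : structure Sym ar),
    II_wins_EF K W ltW beta M N ->
    II_wins_EF K W ltW beta N P ->
    II_wins_EF K W ltW beta M P.
Proof.
  intros K ltK wfK _ _ Sym ar _ W ltW _ beta M N P H1 H2 Theta HT.
  destruct (H1 Theta HT) as [s1 W1]. destruct (H2 Theta HT) as [s2 W2].
  exists (sc M N P W s1 s2). apply win_sc; assumption.
Qed.
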